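(* Let $N\ge2$ be an integer and let $\sigma$ be a finite set of functions $\mathbb{Z}_2\to\mathbb{Z}_N$ that is totally indistinguishable. Let $G(\sigma)$ be the simple undirected graph whose vertex set is $\sigma$, in which two distinct functions $f,g\in\sigma$ are adjacent iff $f(0)=g(0)$ or $f(1)=g(1)$. Then every connected component of $G(\sigma)$ contains an induced subgraph which is a cycle of even length at least $4$.
   Context: A set $\sigma$ of functions $\mathbb{Z}_M\to\mathbb{Z}_N$ is totally indistinguishable if for every $x\in\mathbb{Z}_M$ and every $f\in\sigma$ there exists $f'\in\sigma$ with $f'\neq f$ and $f'(x)=f(x)$. *)

(* Defs.v *)
From mathcomp Require Import all_boot.
Set Implicit Arguments. Unset Strict Implicit. Unset Printing Implicit Defensive.

(* Functions Z_M -> Z_N are represented as finite functions 'I_M -> 'I_N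
   (only equality of values matters). *)
Definition fn (M N : nat) := {ffun 'I_M -> 'I_N}.

Definition totally_indistinguishable (M N : nat) (sigma : {set fn M N}) : Prop :=
  forall (x : 'I_M) (f : fn M N), f \in sigma ->
    exists2 f' : fn M N, f' \in sigma & (f' != f) && (f' x == f x).

Definition z0 : 'I_2 := ord0.
Definition z1 : 'I_2 := ord_max.

Definition Gadj (N : nat) (sigma : {set fn 2 N}) : rel (fn 2 N) :=
  fun f g => [&& f \in sigma, g \in sigma, f != g &
                 (f z0 == g z0) || (f z1 == g z1)].

Definition induced_cycle (N : nat) (sigma : {set fn 2 N}) (c : seq (fn 2 N)) : Prop :=
  [/\ 3 <= size c, uniq c, all (mem sigma) c &
      forall i j : 'I_(size c),
        Gadj sigma (tnth (in_tuple c) i) (tnth (in_tuple c) j)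
        = (val j == (val i).+1 %% size c) || (val i == (val j).+1 %% size c)].

(* Main.v *)
Require Import Defs.
From mathcomp Require Import all_boot.
From mathcomp Require Import zify.
Set Implicit Arguments. Unset Strict Implicit. Unset Printing Implicit Defensive.

Lemma succ_mod (i n : nat) : i < n -> i.+1 %% n = if i.+1 < n then i.+1 else 0.
Proof.
move=> lt; case: ifP => h; first by rewrite modn_small.
have -> : i.+1 = n by lia.
by rewrite modnn.
Qed.

Lemma find_cycle (T : finType) (e : rel T) (S : pred T) :
  irreflexive e ->
  (forall x, S x -> exists y z, [/\ y != z, e x y, e x z, S y & S z]) ->
  forall x, S x -> exists c : seq T, [/\ 3 <= size c, uniq c, all S c &
    forall j, j < size c -> e (nth x c j) (nth x c (j.+1 %% size c))].
Proof.
move=> irr deg x Sx.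
suff H : forall d p, size p + d = #|T| -> uniq (x :: p) -> path e x p ->
   all S (x :: p) -> exists c : seq T, [/\ 3 <= size c, uniq c, all S c &
    forall j, j < size c -> e (nth x c j) (nth x c (j.+1 %% size c))].
  by apply: (H #|T| [::]) => //=; rewrite Sx.
elim=> [|d IH] p.
  move=> sz /card_uniqP hc _ _.
  have := max_card (mem (x :: p)); rewrite hc -sz /= addn0.
  by rewrite ltnn.
move=> sz uq pa al.
set q := x :: p.
set n := size p.
pose l := nth x q n.
pose pre := nth x q n.-1.
have Sl : S l by apply: (allP al); rewrite mem_nth //= ltnS.
have [y [z [yz ely elz Sy Sz]]] := deg _ Sl.
pose w := if y != pre then y else z.
have elw : e l w by rewrite /w; case: ifP.
have Sw : S w by rewrite /w; case: ifP.
have wpre : w != pre.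
  rewrite /w; case: ifP => // /negbFE/eqP <-; by rewrite eq_sym.
have wl : w != l by apply/eqP => wl; move: elw; rewrite wl irr.
case: (boolP (w \in q)) => wq.
- pose i := index w q.
  have iq : i < size q by rewrite index_mem.
  have nthi : nth x q i = w by rewrite nth_index.
  have in_ : i != n by apply/eqP => h; move: wl; rewrite -nthi h eqxx.
  have in1 : i != n.-1 by apply/eqP => h; move: wpre; rewrite -nthi h eqxx.
  have sq : size q = n.+1 by [].
  have i2 : i.+2 <= n.
    move: iq in_ in1; rewrite sq; clear; lia.
  exists (drop i q); rewrite size_drop; split.
  + rewrite sq; move: i2; clear; lia.
  + exact: drop_uniq.
  + by apply/allP => v /mem_drop; apply: (allP al).
  + move=> j hj; rewrite !nth_drop succ_mod //.
    case: ifP => hj1.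
    * move/(pathP x): pa => /(_ (i + j)) h.
      rewrite addnS; apply: h.
      move: hj1; rewrite sq; clear; lia.
    * have -> : i + j = n.
        move: hj hj1 i2; rewrite sq; clear; lia.
      by rewrite addn0 nthi.
- apply: (IH (rcons p w)).
  + rewrite size_rcons; move: sz; clear; lia.
  + by rewrite -rcons_cons rcons_uniq wq.
  + rewrite rcons_path pa /=.
    have <- : l = last x p by rewrite (_ : last x p = last x (x :: p)) // -nth_last.
    exact: elw.
  + by rewrite -rcons_cons all_rcons Sw.
Qed.

Section G.
Variable N : nat.
Variable sigma : {set fn 2 N}.

Definition V := ('I_N + 'I_N)%type.
Definition inc (g : fn 2 N) (u : V) : bool :=
  match u with inl a => g z0 == a | inr b => g z1 == b end.
Definition eB : rel V := fun u w => (u != w) && [exists g in sigma, inc g u && inc g w].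
Definition isl (u : V) : bool := if u is inl _ then true else false.

Lemma fn2_eq (g h : fn 2 N) : g z0 = h z0 -> g z1 = h z1 -> g = h.
Proof.
move=> h0 h1; apply/ffunP => -[[|[|m]] hm] //.
- by have -> : Ordinal hm = z0 by apply: val_inj.
- by have -> : Ordinal hm = z1 by apply: val_inj.
Qed.

Lemma inc_two (g : fn 2 N) u w x : inc g u -> inc g w -> u != w -> inc g x -> x = u \/ x = w.
Proof.
case: u => a; case: w => b; case: x => c /= /eqP ha /eqP hb neq /eqP hc; subst.
all: first [by left | by right | by move: neq; rewrite ?ha ?hb eqxx | idtac].
Qed.

Lemma inc_share (g h : fn 2 N) u : inc g u -> inc h u -> (g z0 == h z0) || (g z1 == h z1).
Proof. by case: u => a /= /eqP -> /eqP ->; rewrite eqxx ?orbT. Qed.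

Lemma share_inc (g h : fn 2 N) : (g z0 == h z0) || (g z1 == h z1) ->
  exists u, inc g u && inc h u.
Proof.
case/orP=> /eqP e.
- by exists (inl (g z0)); rewrite /= e eqxx.
- by exists (inr (g z1)); rewrite /= e eqxx.
Qed.

Lemma eB_isl u w : eB u w -> isl u != isl w.
Proof.
case/andP=> neq /existsP[g /and3P[_ hu hw]]; move: neq hu hw.
by case: u => a; case: w => b /= neq /eqP ha /eqP hb //; move: neq; rewrite -ha -hb eqxx.
Qed.

Definition pt (f : fn 2 N) (u w : V) := odflt f [pick g in sigma | inc g u && inc g w].

Lemma ptP f u w : eB u w -> [/\ pt f u w \in sigma, inc (pt f u w) u & inc (pt f u w) w].
Proof.
case/andP=> _ /existsP[g hg]; rewrite /pt; case: pickP => [h /and3P[]|/(_ g)] //=.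
by rewrite hg.
Qed.

Lemma share_connect (g h : fn 2 N) u : g \in sigma -> h \in sigma -> inc g u -> inc h u ->
  connect (Gadj sigma) g h.
Proof.
move=> gs hs gu hu; case: (eqVneq g h) => [->|ne]; first exact: connect0.
by apply: connect1; rewrite /Gadj gs hs ne (inc_share gu hu).
Qed.

Lemma path_connect p u (g h : fn 2 N) : path eB u p -> g \in sigma -> inc g u ->
  h \in sigma -> inc h (last u p) -> connect (Gadj sigma) g h.
Proof.
elim: p u g => [|w p IH] u g /=; first by move=> _ gs gu hs hu; exact: share_connect gs hs gu hu.
case/andP=> euw pa gs gu hs hl.
have [ks ku kw] := ptP g euw.
apply: connect_trans (share_connect gs ks gu ku) _.
exact: IH pa ks kw hs hl.
Qed.

Lemma path_inc p u : path eB u p -> (exists2 g, g \in sigma & inc g u) ->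
  exists2 g, g \in sigma & inc g (last u p).
Proof.
elim: p u => [|w p IH] u //= /andP[euw pa] _.
case/andP: euw => _ /existsP[g /and3P[gs _ gw]].
by have := IH w pa; apply; exists g.
Qed.
End G.

Lemma s_lt i n : i < n -> i.+1 %% n < n.
Proof. move=> h; rewrite succ_mod //; case: ifP => //; lia. Qed.

Lemma s_inj i j n : i < n -> j < n -> i.+1 %% n = j.+1 %% n -> i = j.
Proof. move=> hi hj; rewrite !succ_mod //; do 2 case: ifP; lia. Qed.

Lemma s_ne i n : 2 <= n -> i < n -> i.+1 %% n != i.
Proof. move=> h2 hi; rewrite succ_mod //; case: ifP; lia. Qed.

Lemma s_s_ne i n : 3 <= n -> i < n -> (i.+1 %% n).+1 %% n != i.
Proof.
move=> h3 hi; have hs := s_lt hi.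
rewrite (succ_mod hs) (succ_mod hi); do 2 case: ifP; lia.
Qed.

Section K.
Variable N : nat.
Variable sigma : {set fn 2 N}.

Lemma key n (vv : nat -> V N) (C : nat -> fn 2 N) :
  3 <= n -> (forall i j, i < n -> j < n -> vv i = vv j -> i = j) ->
  (forall i, i < n -> [/\ C i \in sigma, inc (C i) (vv i) & inc (C i) (vv (i.+1 %% n))]) ->
  forall i j, i < n -> j < n ->
   (C i = C j -> i = j) /\
   Gadj sigma (C i) (C j) = (j == i.+1 %% n) || (i == j.+1 %% n).
Proof.
move=> n3 inj hC i j hi hj.
have n2 : 2 <= n by lia.
have hsi := s_lt hi; have hsj := s_lt hj.
have [ci1 ci2 ci3] := hC i hi; have [cj1 cj2 cj3] := hC j hj.
have neqi : vv i != vv (i.+1 %% n).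
  by apply/eqP => /inj E; move: (s_ne n2 hi); rewrite -E // eqxx.
have neqj : vv j != vv (j.+1 %% n).
  by apply/eqP => /inj E; move: (s_ne n2 hj); rewrite -E // eqxx.
have eqC : C i = C j -> i = j.
  move=> E; rewrite -E in cj2 cj3.
  have [/(inj _ _ hj hi) -> //|/(inj _ _ hj hsi) Ej] := inc_two ci2 ci3 neqi cj2.
  have [/(inj _ _ hsj hi) Esj|/(inj _ _ hsj hsi) Esj] := inc_two ci2 ci3 neqi cj3.
  - by move: (s_s_ne n3 hi); rewrite -Ej Esj eqxx.
  - by rewrite (s_inj hj hi Esj).
split => //.
rewrite /Gadj ci1 cj1 /=.
apply/idP/idP.
- case/andP => ne /share_inc [u /andP[ui uj]].
  have [Eu|Eu] := inc_two ci2 ci3 neqi ui; have [Eu'|Eu'] := inc_two cj2 cj3 neqj uj;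
    rewrite Eu in Eu'.
  + by move: ne; rewrite (inj _ _ hi hj Eu') eqxx.
  + by rewrite (inj _ _ hi hsj Eu') eqxx orbT.
  + by rewrite (inj _ _ hsi hj Eu') eqxx.
  + by move: ne; rewrite (s_inj hi hj (inj _ _ hsi hsj Eu')) eqxx.
- case/orP => /eqP E.
  + have -> : C i != C j.
      by apply/eqP => /eqC Eij; move: (s_ne n2 hi); rewrite -E Eij eqxx.
    by apply: (inc_share ci3); rewrite -E.
  + have -> : C i != C j.
      by apply/eqP => /eqC Eij; move: (s_ne n2 hj); rewrite -E Eij eqxx.
    by apply: (inc_share ci2); rewrite E.
Qed.
End K.

Lemma deg_ok N (sigma : {set fn 2 N}) (TI : totally_indistinguishable sigma) x :
  (exists2 g, g \in sigma & inc g x) ->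
  exists y z, [/\ y != z, eB sigma x y & eB sigma x z].
Proof.
case=> g gs; case: x => a /= /eqP ga; subst a.
- have [h hs /andP[hg /eqP h0]] := TI z0 g gs.
  exists (inr (g z1)), (inr (h z1)); split.
  + apply/eqP => -[E]; move: hg; rewrite (fn2_eq h0 (esym E)) eqxx //.
  + by rewrite /eB /=; apply/existsP; exists g; rewrite gs /= !eqxx.
  + by rewrite /eB /=; apply/existsP; exists h; rewrite hs /= h0 !eqxx.
- have [h hs /andP[hg /eqP h1]] := TI z1 g gs.
  exists (inl (g z0)), (inl (h z0)); split.
  + apply/eqP => -[E]; move: hg; rewrite (fn2_eq (esym E) h1) eqxx //.
  + by rewrite /eB /=; apply/existsP; exists g; rewrite gs /= !eqxx.
  + by rewrite /eB /=; apply/existsP; exists h; rewrite hs /= h1 !eqxx.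
Qed.

Theorem theorem6 (N : nat) (hN : 2 <= N) (sigma : {set fn 2 N}) :
  totally_indistinguishable sigma ->
  forall f, f \in sigma ->
    exists c : seq (fn 2 N),
      [/\ induced_cycle sigma c, ~~ odd (size c), 4 <= size c &
          all (connect (Gadj sigma) f) c].
Proof.
move=> TI f fs.
pose x0 : V N := inl (f z0).
pose S := [pred u | connect (eB sigma) x0 u].
have irr : irreflexive (eB sigma) by move=> u; rewrite /eB eqxx.
have degS : forall x, S x -> exists y z, [/\ y != z, eB sigma x y, eB sigma x z, S y & S z].
  move=> x Sx.
  have [g gs gx] : exists2 g, g \in sigma & inc g x.
    move: Sx => /connectP [p pa ->]; apply: path_inc pa _; exists f => //.
    by rewrite /= eqxx.
  have [y [z [yz exy exz]]] := deg_ok TI (ex_intro2 _ _ g gs gx).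
  exists y, z; split => //; apply: connect_trans Sx (connect1 _) => //.
have [v [v3 vu vS ve]] := find_cycle irr degS (connect0 _ x0).
set n := size v in v3 ve.
pose vv i := nth x0 v i.
pose C i := pt sigma f (vv i) (vv (i.+1 %% n)).
have hC : forall i, i < n -> [/\ C i \in sigma, inc (C i) (vv i) & inc (C i) (vv (i.+1 %% n))].
  by move=> i hi; apply: ptP; apply: ve.
have inj : forall i j, i < n -> j < n -> vv i = vv j -> i = j.
  by move=> i j hi hj /eqP; rewrite /vv nth_uniq // => /eqP.
have K := key v3 inj hC.
exists (mkseq C n).
have sz : size (mkseq C n) = n := size_mkseq _ _.
have nthc : forall i, i < n -> nth f (mkseq C n) i = C i.
  by move=> i hi; rewrite nth_mkseq.
have ev : ~~ odd n.
  have side : forall i, i < n -> isl (vv i) = isl (vv 0) (+) odd i.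
    elim=> [|i IH] hi; first by rewrite addbF.
    have := eB_isl (ve i (ltnW hi)); rewrite succ_mod ?(ltnW hi) // hi.
    rewrite -/(vv i) -/(vv i.+1) IH ?(ltnW hi) //=.
    by case: (isl (vv i.+1)); case: (isl (vv 0)); case: (odd i).
  have hn1 : n.-1 < n by rewrite prednK; lia.
  have := eB_isl (ve n.-1 hn1); rewrite succ_mod // prednK ?ltnn; last lia.
  rewrite -/(vv n.-1) -/(vv 0) side //.
  have -> : n = n.-1.+1 by rewrite prednK //; lia.
  rewrite /=.
  by case: (isl (vv 0)); case: (odd n.-1).
have gen : forall a b, a < size (mkseq C n) -> b < size (mkseq C n) ->
    Gadj sigma (nth f (mkseq C n) a) (nth f (mkseq C n) b) =
    (b == a.+1 %% size (mkseq C n)) || (a == b.+1 %% size (mkseq C n)).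
  move=> a b; rewrite sz => ha hb; rewrite !nthc //.
  by case: (K a b ha hb).
split.
- split.
  + by rewrite sz.
  + apply/(uniqP f) => i j; rewrite !inE sz => hi hj; rewrite !nthc //.
    by case: (K i j hi hj).
  + apply/allP => g /(nthP f) [i hi <-]; rewrite sz in hi; rewrite nthc //.
    by case: (hC i hi).
  + by move=> i j; rewrite !(tnth_nth f) /=; apply: gen.
- by rewrite sz.
- rewrite sz; have : n != 3 by apply/eqP => E; move: ev; rewrite E.
  move: v3; clear; lia.
- apply/allP => g /(nthP f) [i hi <-]; rewrite sz in hi; rewrite nthc //.
  have [Cs Ci _] := hC i hi.
  have := allP vS (vv i) (mem_nth x0 hi).
  rewrite inE => /connectP [p pa E].
  apply: (path_connect pa fs _ Cs); first by rewrite /= eqxx.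
  by rewrite -E.
Qed.
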